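(* Let $(p_n)$ be integers diverging to infinity and $(\kappa_n)$ an arbitrary sequence in $(0,\infty)$. (i) If $\kappa_n/p_n\to\infty$, then $e_{n1}=1+o(1)$, $\tilde e_{n2}=O(p_n/\kappa_n^2)$ and $f_{n2}=p_n/\kappa_n+o(p_n/\kappa_n)$. (ii) If $\kappa_n/p_n\to\xi>0$, then, with $c_\xi:=\frac12+\sqrt{\frac14+\xi^2}$, $e_{n1}\to\xi/c_\xi$, $\tilde e_{n2}=O(1/p_n)$ and $f_{n2}=1/c_\xi+o(1)$. (iii) If $\kappa_n/p_n\to0$, then $e_{n1}=\kappa_n/p_n+O(\kappa_n^3/p_n^3)$, $\tilde e_{n2}=1/p_n+o(1/p_n)$ and $f_{n2}=1+o(1)$.
   Context: For integer $p\ge2$ and $\kappa>0$, let $c_{p,\kappa}=1/\int_{-1}^1(1-t^2)^{(p-3)/2}e^{\kappa t}dt$. Let $U_n$ have density $u\mapsto c_{p_n,\kappa_n}(1-u^2)^{(p_n-3)/2}e^{\kappa_nu}$ on $[-1,1]$; $e_{n1}=E[U_n]$, $\tilde e_{n2}=\mathrm{Var}(U_n)$, $f_{n2}=E[1-U_n^2]$. *)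

(* Defs.v *)
From Stdlib Require Import Reals Lra ClassicalEpsilon.
Open Scope R_scope.

Definition improper_int_m11 (g : R -> R) (l : R) : Prop :=
  forall eps, 0 < eps -> exists delta, 0 < delta /\
    forall h, 0 < h < delta ->
      exists pr : Riemann_integrable g (-1 + h) (1 - h),
        Rabs (RiemannInt pr - l) < eps.

(* The (improper) integral over (-1,1), chosen classically (0 if it does not exist). *)
Definition Int_m11 (g : R -> R) : R :=
  epsilon (inhabits 0) (fun l => improper_int_m11 g l).

Definition wdens (p : nat) (kappa : R) (t : R) : R :=
  Rpower (1 - t ^ 2) ((INR p - 3) / 2) * exp (kappa * t).

Definition c_pk (p : nat) (kappa : R) : R := / Int_m11 (wdens p kappa).

(* E[U], E[U^2], Var(U), E[1-U^2] for U with density c_{p,kappa} wdens. *)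
Definition e1 (p : nat) (kappa : R) : R :=
  c_pk p kappa * Int_m11 (fun t => t * wdens p kappa t).
Definition m2 (p : nat) (kappa : R) : R :=
  c_pk p kappa * Int_m11 (fun t => t ^ 2 * wdens p kappa t).
Definition e2t (p : nat) (kappa : R) : R := m2 p kappa - (e1 p kappa) ^ 2.
Definition f2 (p : nat) (kappa : R) : R :=
  c_pk p kappa * Int_m11 (fun t => (1 - t ^ 2) * wdens p kappa t).

Definition bigO (u v : nat -> R) : Prop :=
  exists C N, forall n, (N <= n)%nat -> Rabs (u n) <= C * Rabs (v n).
Definition littleo (u v : nat -> R) : Prop :=
  forall eps, 0 < eps -> exists N, forall n, (N <= n)%nat -> Rabs (u n) <= eps * Rabs (v n).

Definition nat_diverges (p : nat -> nat) : Prop :=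
  forall M : nat, exists N, forall n, (N <= n)%nat -> (M <= p n)%nat.

(* Main.v *)
Require Import Defs.
From Stdlib Require Import Reals.
From Coquelicot Require Import Coquelicot.
From Stdlib Require Import Lra Lia Classical ClassicalEpsilon.
Open Scope R_scope.

Definition Cont (g : R -> R) := forall t, -1 < t < 1 -> continuous g t.
Definition Sg (g : R -> R) h := RInt g (-1+h) (1-h).
Definition ilim (g : R -> R) l := forall eps, 0 < eps -> exists delta, 0 < delta /\
  forall h, 0 < h < delta -> Rabs (Sg g h - l) < eps.

Lemma Cont_ex g u v : Cont g -> -1 < u < 1 -> -1 < v < 1 -> ex_RInt g u v.
Proof.
intros Hc Hu Hv. apply (ex_RInt_continuous (V:=R_CompleteNormedModule)). intros z Hz. apply Hc.
destruct Hz as [H1 H2]. split.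
- apply Rlt_le_trans with (Rmin u v); auto. apply Rmin_glb_lt; lra.
- apply Rle_lt_trans with (Rmax u v); auto. apply Rmax_lub_lt; lra.
Qed.

Lemma Cont_exS g h : Cont g -> 0 < h < 1 -> ex_RInt g (-1+h) (1-h).
Proof. intros; apply Cont_ex; auto; lra. Qed.

Lemma RInt_lin f g a b u v : ex_RInt f u v -> ex_RInt g u v ->
  RInt (fun x => a * f x + b * g x) u v = a * RInt f u v + b * RInt g u v.
Proof.
intros Hf Hg.
apply is_RInt_unique.
apply (is_RInt_plus (V:=R_CompleteNormedModule) (fun x => a * f x) (fun x => b * g x)).
- apply (is_RInt_scal (V:=R_CompleteNormedModule) f). apply RInt_correct; auto.
- apply (is_RInt_scal (V:=R_CompleteNormedModule) g). apply RInt_correct; auto.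
Qed.

Lemma ilim_unique_imp g l1 l2 : improper_int_m11 g l1 -> improper_int_m11 g l2 -> l1 = l2.
Proof.
intros H1 H2. apply cond_eq. intros eps Heps.
destruct (H1 (eps/2)) as [d1 [Hd1 Hh1]]; [lra|].
destruct (H2 (eps/2)) as [d2 [Hd2 Hh2]]; [lra|].
set (h := Rmin d1 d2 / 2).
assert (Hm : 0 < Rmin d1 d2) by (apply Rmin_glb_lt; lra).
assert (Hh : h < d1 /\ h < d2).
{ unfold h. split; [apply Rlt_le_trans with (Rmin d1 d2); [lra|apply Rmin_l]|
  apply Rlt_le_trans with (Rmin d1 d2); [lra|apply Rmin_r]]. }
assert (0 < h) by (unfold h; lra).
destruct (Hh1 h) as [pr1 E1]; [lra|].
destruct (Hh2 h) as [pr2 E2]; [lra|].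
rewrite <- RInt_Reals in E1, E2.
rewrite Rabs_minus_sym in E1.
replace (l1 - l2) with ((l1 - RInt g (-1+h) (1-h)) + (RInt g (-1+h) (1-h) - l2)) by ring.
eapply Rle_lt_trans; [apply Rabs_triang|]. lra.
Qed.

Lemma ilim_Int g l : Cont g -> ilim g l -> Int_m11 g = l.
Proof.
intros Hc Hl.
assert (Hi : improper_int_m11 g l).
{ intros eps Heps. destruct (Hl eps Heps) as [d [Hd Hh]].
  exists (Rmin d 1). split; [apply Rmin_glb_lt; lra|].
  intros h Hh'.
  assert (h < d /\ h < 1) as [Ha Hb].
  { split; apply Rlt_le_trans with (Rmin d 1); try lra; [apply Rmin_l|apply Rmin_r]. }
  exists (ex_RInt_Reals_0 _ _ _ (Cont_exS g h Hc (conj (proj1 Hh') Hb))).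
  rewrite <- RInt_Reals. apply Hh. lra. }
unfold Int_m11.
apply (ilim_unique_imp g).
- apply (epsilon_spec (inhabits 0) (fun l => improper_int_m11 g l)). exists l; auto.
- auto.
Qed.

Lemma ilim_ext g1 g2 l : (forall t, -1 < t < 1 -> g1 t = g2 t) -> ilim g1 l -> ilim g2 l.
Proof.
intros He Hl eps Heps. destruct (Hl eps Heps) as [d [Hd Hh]].
exists (Rmin d 1). split; [apply Rmin_glb_lt; lra|].
intros h Hh'.
assert (h < d /\ h < 1) as [Ha Hb].
{ split; apply Rlt_le_trans with (Rmin d 1); try lra; [apply Rmin_l|apply Rmin_r]. }
unfold Sg. rewrite <- (RInt_ext g1).
- apply Hh; lra.
- intros x Hx. apply He. rewrite Rmin_left in Hx by lra. rewrite Rmax_right in Hx by lra. lra.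
Qed.

Lemma ilim_lin g1 g2 l1 l2 a b : Cont g1 -> Cont g2 -> ilim g1 l1 -> ilim g2 l2 ->
  ilim (fun t => a * g1 t + b * g2 t) (a * l1 + b * l2).
Proof.
intros C1 C2 H1 H2 eps Heps.
set (e := eps / (2 * (Rabs a + Rabs b + 1))).
assert (He : 0 < e).
{ unfold e. apply Rdiv_lt_0_compat; auto. pose proof (Rabs_pos a); pose proof (Rabs_pos b); lra. }
destruct (H1 e He) as [d1 [Hd1 Hh1]].
destruct (H2 e He) as [d2 [Hd2 Hh2]].
exists (Rmin (Rmin d1 d2) 1). split.
{ apply Rmin_glb_lt; [apply Rmin_glb_lt|]; lra. }
intros h Hh.
assert (h < d1 /\ h < d2 /\ h < 1) as [Ha [Hb Hc]].
{ pose proof (Rmin_l (Rmin d1 d2) 1); pose proof (Rmin_r (Rmin d1 d2) 1);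
  pose proof (Rmin_l d1 d2); pose proof (Rmin_r d1 d2); lra. }
unfold Sg. rewrite RInt_lin; try (apply Cont_exS; auto; lra).
pose proof (Hh1 h (conj (proj1 Hh) Ha)) as E1. pose proof (Hh2 h (conj (proj1 Hh) Hb)) as E2.
unfold Sg in E1, E2.
replace (a * RInt g1 (-1 + h) (1 - h) + b * RInt g2 (-1 + h) (1 - h) - (a * l1 + b * l2))
  with (a * (RInt g1 (-1 + h) (1 - h) - l1) + b * (RInt g2 (-1 + h) (1 - h) - l2)) by ring.
eapply Rle_lt_trans; [apply Rabs_triang|]. rewrite !Rabs_mult.
assert (Rabs a * Rabs (RInt g1 (-1 + h) (1 - h) - l1) <= Rabs a * e)
  by (apply Rmult_le_compat_l; [apply Rabs_pos|lra]).
assert (Rabs b * Rabs (RInt g2 (-1 + h) (1 - h) - l2) <= Rabs b * e)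
  by (apply Rmult_le_compat_l; [apply Rabs_pos|lra]).
assert ((Rabs a + Rabs b) * e < eps).
{ unfold e. pose proof (Rabs_pos a); pose proof (Rabs_pos b).
  apply Rlt_le_trans with ((Rabs a + Rabs b + 1) * (eps / (2 * (Rabs a + Rabs b + 1)))).
  - apply Rmult_lt_compat_r; [exact He|lra].
  - replace ((Rabs a + Rabs b + 1) * (eps / (2 * (Rabs a + Rabs b + 1)))) with (eps/2) by (field; lra). lra. }
lra.
Qed.

Lemma Sg_ge0 g h : Cont g -> (forall t, -1 < t < 1 -> 0 <= g t) -> 0 < h < 1 -> 0 <= Sg g h.
Proof.
intros Hc Hp Hh. apply RInt_ge_0; [lra| apply Cont_exS; auto|].
intros x Hx; apply Hp; lra.
Qed.

Lemma ilim_ge0 g l : Cont g -> (forall t, -1 < t < 1 -> 0 <= g t) -> ilim g l -> 0 <= l.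
Proof.
intros Hc Hp Hl. destruct (Rle_or_lt 0 l) as [|Hneg]; auto.
destruct (Hl (- l)) as [d [Hd Hh]]; [lra|].
set (h := Rmin d 1 / 2).
assert (0 < Rmin d 1) by (apply Rmin_glb_lt; lra).
assert (h < d /\ h < 1) as [Ha Hb].
{ pose proof (Rmin_l d 1); pose proof (Rmin_r d 1). unfold h. lra. }
assert (0 < h) by (unfold h; lra).
pose proof (Hh h (conj H0 Ha)) as E.
pose proof (Sg_ge0 g h Hc Hp (conj H0 Hb)) as P.
rewrite Rabs_right in E; lra.
Qed.

Lemma Sg_mono g h1 h2 : Cont g -> (forall t, -1 < t < 1 -> 0 <= g t) ->
  0 < h1 <= h2 -> h2 < 1 -> Sg g h2 <= Sg g h1.
Proof.
intros Hc Hp H1 H2. unfold Sg.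
rewrite <- (RInt_Chasles g (-1+h1) (-1+h2) (1-h1)) by (apply Cont_ex; auto; lra).
rewrite <- (RInt_Chasles g (-1+h2) (1-h2) (1-h1)) by (apply Cont_ex; auto; lra).
assert (0 <= RInt g (-1+h1) (-1+h2)).
{ apply RInt_ge_0; [lra|apply Cont_ex; auto; lra|]. intros; apply Hp; lra. }
assert (0 <= RInt g (1-h2) (1-h1)).
{ apply RInt_ge_0; [lra|apply Cont_ex; auto; lra|]. intros; apply Hp; lra. }
change plus with Rplus. lra.
Qed.

Lemma ilim_exists g K : Cont g -> (forall t, -1 < t < 1 -> 0 <= g t <= K) ->
  exists l, ilim g l /\ Sg g (1/2) <= l.
Proof.
intros Hc Hb.
assert (Hp : forall t, -1 < t < 1 -> 0 <= g t) by (intros t Ht; apply Hb; auto).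
assert (HK : 0 <= K) by (destruct (Hb 0); lra).
set (E := fun y => exists h, 0 < h < 1 /\ y = Sg g h).
assert (Hbd : bound E).
{ exists (2 * K). intros y [h [Hh ->]]. unfold Sg.
  apply Rle_trans with (RInt (fun _ => K) (-1+h) (1-h)).
  - apply RInt_le; [lra|apply Cont_exS; auto|apply ex_RInt_const|].
    intros; apply Hb; lra.
  - rewrite RInt_const. change scal with Rmult. change (Rmult ((1-h) - (-1+h)) K) with (((1-h) - (-1+h)) * K).
    nra. }
assert (Hne : exists y, E y) by (exists (Sg g (1/2)); exists (1/2); split; [lra|auto]).
destruct (completeness E Hbd Hne) as [l [Hub Hlub]].
exists l. split.
- intros eps Heps.
  destruct (classic (exists h0, 0 < h0 < 1 /\ l - eps < Sg g h0)) as [[h0 [Hh0 Hl0]]|Hn].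
  + exists h0. split; [lra|]. intros h Hh.
    pose proof (Sg_mono g h h0 Hc Hp (conj (proj1 Hh) (Rlt_le _ _ (proj2 Hh))) (proj2 Hh0)) as M.
    assert (U : Sg g h <= l) by (apply Hub; exists h; split; [lra|auto]).
    rewrite Rabs_left1; lra.
  + exfalso. assert (l <= l - eps); [|lra].
    apply Hlub. intros y [h [Hh ->]].
    destruct (Rle_or_lt (Sg g h) (l - eps)) as [|Hlt]; auto.
    exfalso; apply Hn; exists h; auto.
- apply Hub. exists (1/2); split; [lra|auto].
Qed.

Lemma exp_le_mono x y : x <= y -> exp x <= exp y.
Proof. intros [H|H]; [left; apply exp_increasing; auto| right; subst; auto]. Qed.

Lemma ln_le0 x : 0 < x -> x <= 1 -> ln x <= 0.
Proof. intros H0 [H|H]; [left; rewrite <- ln_1; apply ln_increasing; auto| subst; rewrite ln_1; lra]. Qed.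

Lemma Rpow_le1 x a : 0 < x -> x <= 1 -> 0 <= a -> Rpower x a <= 1.
Proof.
intros. unfold Rpower. rewrite <- exp_0. apply exp_le_mono.
pose proof (ln_le0 x H H0). nra.
Qed.

Lemma Rpow_pos x a : 0 < Rpower x a.
Proof. unfold Rpower; apply exp_pos. Qed.

Definition pw p k c0 c1 c2 c3 t := (c0 + c1*t + c2*t^2 + c3*t^3) * wdens p k t.

Lemma pw_cont p k c0 c1 c2 c3 : Cont (pw p k c0 c1 c2 c3).
Proof.
intros t Ht. apply (@ex_derive_continuous R_AbsRing R_NormedModule). unfold pw, wdens, Rpower.
auto_derive. nra.
Qed.

Lemma one_m_t2 t : -1 < t < 1 -> 0 < 1 - t^2 <= 1.
Proof. intros; split; nra. Qed.

Lemma wd_pos p k t : -1 < t < 1 -> 0 < wdens p k t.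
Proof. intros. unfold wdens. apply Rmult_lt_0_compat; [apply Rpow_pos|apply exp_pos]. Qed.

Lemma wd_le p k t : (3 <= p)%nat -> 0 < k -> -1 < t < 1 -> wdens p k t <= exp k.
Proof.
intros Hp Hk Ht. unfold wdens.
assert (3 <= INR p) by (apply (le_INR 3 p) in Hp; simpl in Hp; lra).
pose proof (one_m_t2 t Ht).
assert (Rpower (1 - t^2) ((INR p - 3)/2) <= 1) by (apply Rpow_le1; lra).
assert (exp (k*t) <= exp k) by (apply exp_le_mono; nra).
pose proof (Rpow_pos (1 - t^2) ((INR p - 3)/2)). pose proof (exp_pos (k*t)).
nra.
Qed.

Lemma wd_shift p k t : -1 < t < 1 -> wdens (p+2) k t = (1 - t^2) * wdens p k t.
Proof.
intros Ht. unfold wdens. rewrite plus_INR. simpl INR.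
replace ((INR p + (1+1) - 3)/2) with ((INR p - 3)/2 + 1) by field.
rewrite Rpower_plus, Rpower_1 by (pose proof (one_m_t2 t Ht); lra). ring.
Qed.

Lemma pw_ilim_lin p k a0 a1 a2 a3 b0 b1 b2 b3 l1 l2 x y :
  ilim (pw p k a0 a1 a2 a3) l1 -> ilim (pw p k b0 b1 b2 b3) l2 ->
  ilim (pw p k (x*a0+y*b0) (x*a1+y*b1) (x*a2+y*b2) (x*a3+y*b3)) (x*l1+y*l2).
Proof.
intros H1 H2. eapply ilim_ext; [| apply ilim_lin; [apply pw_cont|apply pw_cont|exact H1|exact H2]].
intros t _. unfold pw. simpl. ring.
Qed.

Lemma ilim_unique g l1 l2 : Cont g -> ilim g l1 -> ilim g l2 -> l1 = l2.
Proof. intros. rewrite <- (ilim_Int g l1), <- (ilim_Int g l2); auto. Qed.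

Lemma ilim_Int_ext g g' l : Cont g' -> (forall t, -1 < t < 1 -> g t = g' t) -> ilim g' l -> Int_m11 g = l.
Proof.
intros Hc He Hl. unfold Int_m11.
assert (Hi : improper_int_m11 g l).
{ intros eps Heps. destruct (Hl eps Heps) as [d [Hd Hh]].
  exists (Rmin d 1). split; [apply Rmin_glb_lt; lra|].
  intros h Hh'.
  assert (h < d /\ h < 1) as [Ha Hb].
  { split; apply Rlt_le_trans with (Rmin d 1); try lra; [apply Rmin_l|apply Rmin_r]. }
  assert (Hx : forall x, Rmin (-1+h) (1-h) < x < Rmax (-1+h) (1-h) -> g' x = g x).
  { intros x Hx. rewrite Rmin_left in Hx by lra. rewrite Rmax_right in Hx by lra.
    symmetry; apply He; lra. }
  exists (ex_RInt_Reals_0 _ _ _ (ex_RInt_ext _ _ _ _ Hx (Cont_exS g' h Hc (conj (proj1 Hh') Hb)))).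
  rewrite <- RInt_Reals. rewrite <- (RInt_ext g'); [apply Hh; lra|auto]. }
apply (ilim_unique_imp g).
- apply (epsilon_spec (inhabits 0) (fun l => improper_int_m11 g l)). exists l; auto.
- auto.
Qed.

Lemma ilim_FTC g B C : Cont g -> (forall t, -1 < t < 1 -> is_derive B t (g t)) ->
  (forall t, -1 < t < 1 -> Rabs (B t) <= C * (1 - t^2)) -> ilim g 0.
Proof.
intros Hc Hd Hb.
assert (HC : 0 <= C) by (pose proof (Hb 0 ltac:(lra)); pose proof (Rabs_pos (B 0)); lra).
intros eps Heps.
exists (Rmin 1 (eps / (4*C+1))). split.
{ apply Rmin_glb_lt; [lra|apply Rdiv_lt_0_compat; lra]. }
intros h Hh.
assert (h < 1 /\ h < eps / (4*C+1)) as [H1 H2].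
{ pose proof (Rmin_l 1 (eps / (4*C+1))); pose proof (Rmin_r 1 (eps / (4*C+1))); lra. }
assert (E : Sg g h = B (1-h) - B (-1+h)).
{ unfold Sg. apply is_RInt_unique.
  apply (is_RInt_derive (V:=R_CompleteNormedModule) B g).
  - intros x Hx. rewrite Rmin_left in Hx by lra. rewrite Rmax_right in Hx by lra. apply Hd; lra.
  - intros x Hx. rewrite Rmin_left in Hx by lra. rewrite Rmax_right in Hx by lra. apply Hc; lra. }
rewrite E, Rminus_0_r.
pose proof (Hb (1-h) ltac:(lra)). pose proof (Hb (-1+h) ltac:(lra)).
unfold Rminus at 1. eapply Rle_lt_trans; [apply Rabs_triang|]. rewrite Rabs_Ropp.
assert (4*C*h < eps).
{ apply Rle_lt_trans with (4*C*(eps/(4*C+1))). nra.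
  apply Rmult_lt_reg_r with (4*C+1); [lra|].
  replace (4 * C * (eps / (4 * C + 1)) * (4 * C + 1)) with (4*C*eps) by (field; lra). nra. }
nra.
Qed.
Definition B1 p k t := Rpower (1 - t^2) ((INR p - 3)/2 + 1) * exp (k*t).

Lemma exp_shift a x : 0 < x -> exp ((a+1) * ln x) = exp (a * ln x) * x.
Proof. intros. rewrite Rmult_plus_distr_r, exp_plus, Rmult_1_l, exp_ln; auto. Qed.

Lemma B1_der p k t : -1 < t < 1 -> is_derive (B1 p k) t (pw p k k (-(INR p - 1)) (-k) 0 t).
Proof.
intros Ht. pose proof (one_m_t2 t Ht). unfold B1, pw, wdens, Rpower.
auto_derive. nra.
replace (1 + - (t * (t * 1))) with (1 - t^2) by ring.
rewrite exp_shift by lra. field. lra.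
Qed.

Lemma B2_der p k t : -1 < t < 1 -> is_derive (fun t => t * B1 p k t) t (pw p k 1 k (-(INR p)) (-k) t).
Proof.
intros Ht. pose proof (one_m_t2 t Ht). unfold B1, pw, wdens, Rpower.
auto_derive. nra.
replace (1 + - (t * (t * 1))) with (1 - t^2) by ring.
rewrite exp_shift by lra. field. lra.
Qed.

Lemma B1_bd p k t : (3 <= p)%nat -> 0 < k -> -1 < t < 1 -> Rabs (B1 p k t) <= exp k * (1 - t^2).
Proof.
intros Hp Hk Ht. pose proof (one_m_t2 t Ht).
assert (3 <= INR p) by (apply (le_INR 3 p) in Hp; simpl in Hp; lra).
unfold B1. rewrite Rpower_plus, Rpower_1 by lra.
assert (Rpower (1 - t^2) ((INR p - 3)/2) <= 1) by (apply Rpow_le1; lra).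
assert (exp (k*t) <= exp k) by (apply exp_le_mono; nra).
pose proof (Rpow_pos (1 - t^2) ((INR p - 3)/2)). pose proof (exp_pos (k*t)).
rewrite Rabs_right by (apply Rle_ge; repeat apply Rmult_le_pos; lra).
assert (Rpower (1 - t ^ 2) ((INR p - 3) / 2) * (1 - t ^ 2) <= 1 - t^2) by nra.
replace (exp k * (1-t^2)) with ((1-t^2)*exp k) by ring.
apply Rmult_le_compat; auto; [apply Rmult_le_pos|]; lra.
Qed.

Lemma pw_exists p k c0 c1 c2 c3 Kc : (3 <= p)%nat -> 0 < k ->
  (forall t, -1 < t < 1 -> 0 <= c0 + c1*t + c2*t^2 + c3*t^3 <= Kc) ->
  exists l, ilim (pw p k c0 c1 c2 c3) l.
Proof.
intros Hp Hk Hb.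
destruct (ilim_exists (pw p k c0 c1 c2 c3) (Kc * exp k)) as [l [Hl _]].
- apply pw_cont.
- intros t Ht. pose proof (Hb t Ht). pose proof (wd_pos p k t Ht). pose proof (wd_le p k t Hp Hk Ht).
  unfold pw. split; [nra|]. apply Rmult_le_compat; lra.
- exists l; auto.
Qed.

Lemma Z_exists p k : (3 <= p)%nat -> 0 < k -> exists Z, ilim (pw p k 1 0 0 0) Z /\ 0 < Z.
Proof.
intros Hp Hk.
destruct (ilim_exists (pw p k 1 0 0 0) (exp k)) as [l [Hl Hs]].
- apply pw_cont.
- intros t Ht. pose proof (wd_pos p k t Ht). pose proof (wd_le p k t Hp Hk Ht).
  unfold pw. lra.
- exists l. split; auto. apply Rlt_le_trans with (2 := Hs). unfold Sg.
  apply RInt_gt_0; [lra| |].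
  + intros x Hx. unfold pw. pose proof (wd_pos p k x ltac:(lra)). lra.
  + intros x Hx. apply pw_cont. lra.
Qed.

Lemma pw_lin2 p k a0 a1 a2 a3 b0 b1 b2 b3 d0 d1 d2 d3 l1 l2 l x y :
  d0 = x*a0+y*b0 -> d1 = x*a1+y*b1 -> d2 = x*a2+y*b2 -> d3 = x*a3+y*b3 -> l = x*l1+y*l2 ->
  ilim (pw p k a0 a1 a2 a3) l1 -> ilim (pw p k b0 b1 b2 b3) l2 ->
  ilim (pw p k d0 d1 d2 d3) l.
Proof. intros -> -> -> -> ->. apply pw_ilim_lin. Qed.

Lemma key p k : (3 <= p)%nat -> 0 < k ->
  f2 p k = (INR p - 1) * e1 p k / k /\
  e1 p k * (INR p + k * e1 (p+2) k) = k /\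
  e2t p k = 1 - e1 p k ^ 2 - (INR p - 1) * e1 p k / k /\
  0 <= e2t p k /\ 0 <= e1 p k.
Proof.
intros Hp Hk.
assert (HP : 3 <= INR p) by (apply (le_INR 3 p) in Hp; simpl in Hp; lra).
destruct (Z_exists p k Hp Hk) as [Z [HZ Zpos]].
destruct (Z_exists (p+2) k ltac:(lia) Hk) as [Z' [HZ' Z'pos]].
destruct (pw_exists p k 0 0 1 0 1 Hp Hk) as [M2 HM2].
{ intros t Ht. split; nra. }
destruct (pw_exists p k 1 1 0 0 2 Hp Hk) as [N HN].
{ intros t Ht. split; nra. }
destruct (pw_exists p k 1 1 (-1) (-1) 2 Hp Hk) as [N2 HN2].
{ intros t Ht. assert (0 <= 1 - t^2 <= 1) by nra. split; nra. }
assert (HM1 : ilim (pw p k 0 1 0 0) (N - Z)).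
{ apply (pw_lin2 p k 1 1 0 0 1 0 0 0 _ _ _ _ N Z _ 1 (-1)); auto; ring. }
assert (HF : ilim (pw p k 1 0 (-1) 0) (Z - M2)).
{ apply (pw_lin2 p k 1 0 0 0 0 0 1 0 _ _ _ _ Z M2 _ 1 (-1)); auto; ring. }
assert (HM1' : ilim (pw p k 0 1 0 (-1)) (N2 - (Z - M2))).
{ apply (pw_lin2 p k 1 1 (-1) (-1) 1 0 (-1) 0 _ _ _ _ N2 (Z - M2) _ 1 (-1)); auto; ring. }
assert (EZ' : Z' = Z - M2).
{ apply (ilim_unique (pw p k 1 0 (-1) 0)); auto. apply pw_cont.
  eapply ilim_ext; [|exact HZ']. intros t Ht. unfold pw. rewrite wd_shift by auto. ring. }
assert (IBP1 : k * (Z - M2) + (-(INR p - 1)) * (N - Z) = 0).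
{ apply (ilim_unique (pw p k k (-(INR p - 1)) (-k) 0)). apply pw_cont.
  - apply (pw_lin2 p k 1 0 (-1) 0 0 1 0 0 _ _ _ _ (Z - M2) (N - Z) _ k (-(INR p - 1))); auto; ring.
  - apply (ilim_FTC _ (B1 p k) (exp k)). apply pw_cont.
    + intros; apply B1_der; auto.
    + intros; apply B1_bd; auto. }
assert (IBP2 : Z + k * (N2 - (Z - M2)) + (- INR p) * M2 = 0).
{ apply (ilim_unique (pw p k 1 k (-(INR p)) (-k))). apply pw_cont.
  - apply (pw_lin2 p k 1 k 0 (-k) 0 0 1 0 _ _ _ _ (Z + k * (N2 - (Z - M2))) M2 _ 1 (- INR p)); auto; try ring.
    apply (pw_lin2 p k 1 0 0 0 0 1 0 (-1) _ _ _ _ Z (N2 - (Z - M2)) _ 1 k); auto; ring.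
  - apply (ilim_FTC _ (fun t => t * B1 p k t) (exp k)). apply pw_cont.
    + intros; apply B2_der; auto.
    + intros t Ht. pose proof (B1_bd p k t Hp Hk Ht). rewrite Rabs_mult.
      pose proof (Rabs_pos (B1 p k t)). assert (Rabs t <= 1) by (apply Rabs_le; lra).
      assert (Rabs t * Rabs (B1 p k t) <= 1 * Rabs (B1 p k t)) by (apply Rmult_le_compat_r; lra). lra. }
set (A := (N - Z) / Z).
assert (Hvar : 0 <= (A^2 * Z + (-2*A) * (N - Z)) + 1 * M2).
{ apply (ilim_ge0 (pw p k (A^2) (-2*A) 1 0)). apply pw_cont.
  - intros t Ht. unfold pw. pose proof (wd_pos p k t Ht).
    apply Rmult_le_pos; [|lra]. replace (A ^ 2 + -2 * A * t + 1 * t ^ 2 + 0 * t ^ 3) with ((t-A)^2) by ring. apply pow2_ge_0.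
  - apply (pw_lin2 p k (A^2) (-2*A) 0 0 0 0 1 0 _ _ _ _ (A^2 * Z + (-2*A) * (N - Z)) M2 _ 1 1); auto; try ring.
    apply (pw_lin2 p k 1 0 0 0 0 1 0 0 _ _ _ _ Z (N - Z) _ (A^2) (-2*A)); auto; ring. }
assert (HIZ : Int_m11 (wdens p k) = Z).
{ apply (ilim_Int_ext _ (pw p k 1 0 0 0)); auto. apply pw_cont. intros; unfold pw; ring. }
assert (HIM1 : Int_m11 (fun t => t * wdens p k t) = N - Z).
{ apply (ilim_Int_ext _ (pw p k 0 1 0 0)); auto. apply pw_cont. intros; unfold pw; ring. }
assert (HIM2 : Int_m11 (fun t => t^2 * wdens p k t) = M2).
{ apply (ilim_Int_ext _ (pw p k 0 0 1 0)); auto. apply pw_cont. intros; unfold pw; ring. }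
assert (HIF : Int_m11 (fun t => (1 - t^2) * wdens p k t) = Z - M2).
{ apply (ilim_Int_ext _ (pw p k 1 0 (-1) 0)); auto. apply pw_cont. intros; unfold pw; ring. }
assert (HIZ' : Int_m11 (wdens (p+2) k) = Z - M2).
{ rewrite <- EZ'. apply (ilim_Int_ext _ (pw (p+2) k 1 0 0 0)); auto. apply pw_cont. intros; unfold pw; ring. }
assert (HIM1' : Int_m11 (fun t => t * wdens (p+2) k t) = N2 - (Z - M2)).
{ apply (ilim_Int_ext _ (pw p k 0 1 0 (-1))); auto. apply pw_cont. intros t Ht; unfold pw.
  rewrite wd_shift by auto. ring. }
unfold f2, e2t, m2, e1, c_pk.
rewrite HIZ, HIM1, HIM2, HIF, HIZ', HIM1'.
assert (ZM : 0 < Z - M2) by (rewrite <- EZ'; auto).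
clear HZ HZ' HM2 HN HN2 HM1 HF HM1' HIZ HIM1 HIM2 HIF HIZ' HIM1'.
set (M1 := N - Z) in *. set (F := Z - M2) in *. set (Q := N2 - F) in *.
set (P := INR p) in *.
assert (E1 : k * F = (P - 1) * M1) by lra.
assert (E2 : k * Q = P * M2 - Z) by lra.
assert (G1 : / Z * F = (P - 1) * (/ Z * M1) / k).
{ replace ((P - 1) * (/ Z * M1) / k) with (((P-1)*M1)/(Z*k)) by (field; lra).
  rewrite <- E1. field. lra. }
assert (HA : M1 = A * Z) by (unfold A, M1; field; lra).
assert (HFd : F = Z - M2) by reflexivity. clearbody F M1 Q A P.
repeat split.
- exact G1.
- replace (k * (/F * Q)) with ((P*M2 - Z)/F) by (rewrite <- E2; field; lra).
  replace (P + (P*M2 - Z)/F) with ((P-1)*Z/F) by (rewrite HFd; field; lra).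
  replace (/ Z * M1 * ((P - 1) * Z / F)) with ((P-1)*M1/F) by (field; lra).
  rewrite <- E1. field. lra.
- rewrite <- G1. rewrite HFd. field. lra.
- assert (0 <= M2 - A^2 * Z) by (rewrite HA in Hvar; nra).
  replace (/ Z * M2 - (/ Z * M1) ^ 2) with ((M2 - A^2*Z)/Z) by (rewrite HA; field; lra).
  apply Rdiv_le_0_compat; lra.
- replace (/ Z * M1) with (k * F / ((P-1)*Z)) by (rewrite E1; field; lra).
  apply Rdiv_le_0_compat; [apply Rmult_le_pos; lra|apply Rmult_lt_0_compat; lra].
Qed.

Lemma INR3 p : (3 <= p)%nat -> 3 <= INR p.
Proof. intros Hp. apply (le_INR 3 p) in Hp; simpl in Hp; lra. Qed.

Lemma var_rec P k A B V V' : 0 < k -> 3 <= P -> 0 <= B ->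
  A * (P + k*B) = k -> V = 1 - A^2 - (P-1)*A/k -> V' = 1 - B^2 - (P+1)*B/k ->
  V = (P - k^2 * V') / (P + k*B)^2.
Proof.
intros Hk HP HB HA -> ->.
assert (HD : 0 < P + k*B) by nra.
assert (A = k / (P + k*B)) by (apply Rmult_eq_reg_r with (P + k*B); [rewrite HA; field|]; lra).
subst A. field. lra.
Qed.

Lemma quad_bound x c k : 0 <= x -> 0 < k -> 0 <= c -> x^2 + c*x/k <= 1 ->
  x <= 2*k / (c + sqrt (c^2 + 4*k^2)).
Proof.
intros Hx Hk Hc H.
assert (Hs0 : 0 <= c^2 + 4*k^2) by nra.
pose proof (sqrt_pos (c^2 + 4*k^2)) as Hs.
pose proof (sqrt_sqrt _ Hs0) as Hss.
set (s := sqrt (c^2 + 4*k^2)) in *.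
assert (Hcs : 0 < c + s).
{ assert (0 < s). { apply sqrt_lt_R0. nra. } lra. }
apply Rmult_le_reg_r with (c + s); auto.
replace (2 * k / (c + s) * (c + s)) with (2*k) by (field; lra).
assert (Hq : k*x^2 + c*x - k <= 0).
{ replace (k*x^2 + c*x - k) with (k * (x^2 + c*x/k - 1)) by (field; lra). nra. }
assert (E : (x*(c+s) - 2*k) * (k*x + (c+s)/2) = (c+s) * (k*x^2 + c*x - k)) by nra.
destruct (Rle_or_lt (x*(c+s)) (2*k)) as [|Hlt]; auto.
exfalso.
assert (0 < (x*(c+s) - 2*k) * (k*x + (c+s)/2)) by (apply Rmult_lt_0_compat; nra).
nra.
Qed.

Lemma facts p k : (3 <= p)%nat -> 0 < k ->
  3 <= INR p /\ 0 <= e1 p k /\ 0 <= e1 (p+2) k /\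
  e1 p k * (INR p + k * e1 (p+2) k) = k /\
  f2 p k = (INR p - 1) * e1 p k / k /\
  e2t p k = 1 - e1 p k ^ 2 - (INR p - 1) * e1 p k / k /\ 0 <= e2t p k /\
  e2t (p+2) k = 1 - e1 (p+2) k ^ 2 - (INR p + 1) * e1 (p+2) k / k /\ 0 <= e2t (p+2) k /\
  e2t p k = (INR p - k^2 * e2t (p+2) k) / (INR p + k * e1 (p+2) k)^2.
Proof.
intros Hp Hk.
destruct (key p k Hp Hk) as [K1 [K2 [K3 [K4 K5]]]].
destruct (key (p+2) k ltac:(lia) Hk) as [L1 [L2 [L3 [L4 L5]]]].
rewrite plus_INR in L3. simpl INR in L3.
replace (INR p + (1+1) - 1) with (INR p + 1) in L3 by ring.
pose proof (INR3 p Hp).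
repeat split; auto.
apply (var_rec (INR p) k (e1 p k) (e1 (p+2) k)); auto.
Qed.

Lemma B_le p k : (3 <= p)%nat -> 0 < k -> e1 (p+2) k <= k / (INR p + 1) /\ e1 (p+2) k <= 1.
Proof.
intros Hp Hk. destruct (facts p k Hp Hk) as (HP & HA & HB & HR & Hf & HV & HV0 & HV' & HV'0 & Hrec).
set (B := e1 (p+2) k) in *.
assert (H1 : B^2 + (INR p + 1) * B / k <= 1) by lra.
assert (H2 : (INR p + 1) * B / k <= 1) by nra.
split.
- apply Rmult_le_reg_r with ((INR p + 1)/k). apply Rdiv_lt_0_compat; lra.
  replace (k / (INR p + 1) * ((INR p + 1) / k)) with 1 by (field; lra).
  replace (B * ((INR p + 1) / k)) with ((INR p + 1) * B / k) by (field; lra). lra.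
- assert (0 <= (INR p + 1) * B / k) by (apply Rdiv_le_0_compat; nra). nra.
Qed.

Lemma V_up p k : (3 <= p)%nat -> 0 < k -> e2t p k <= 1 / INR p.
Proof.
intros Hp Hk. destruct (facts p k Hp Hk) as (HP & HA & HB & HR & Hf & HV & HV0 & HV' & HV'0 & Hrec).
rewrite Hrec.
set (B := e1 (p+2) k) in *. set (V' := e2t (p+2) k) in *.
assert (HD : INR p <= INR p + k*B) by nra.
assert (HD' : 0 < INR p + k*B) by lra.
apply Rle_trans with (INR p / (INR p + k*B)^2).
- apply Rmult_le_compat_r; [apply Rlt_le, Rinv_0_lt_compat; nra|nra].
- apply Rmult_le_reg_r with ((INR p + k*B)^2 * INR p); [apply Rmult_lt_0_compat; [apply pow_lt|]; lra|].
  replace (INR p / (INR p + k * B) ^ 2 * ((INR p + k * B) ^ 2 * INR p)) with (INR p * INR p) by (field; lra).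
  replace (1 / INR p * ((INR p + k * B) ^ 2 * INR p)) with ((INR p + k * B) ^ 2) by (field; lra).
  nra.
Qed.

Lemma iii_A p k : (3 <= p)%nat -> 0 < k -> Rabs (e1 p k - k / INR p) <= (k / INR p)^3.
Proof.
intros Hp Hk. destruct (facts p k Hp Hk) as (HP & HA & HB & HR & Hf & HV & HV0 & HV' & HV'0 & Hrec).
destruct (B_le p k Hp Hk) as [Hb1 _].
set (B := e1 (p+2) k) in *. set (A := e1 p k) in *. set (P := INR p) in *.
assert (EA : A - k/P = - (k^2 * B) / (P * (P + k*B))).
{ assert (A = k / (P + k*B)) by (apply Rmult_eq_reg_r with (P + k*B); [rewrite HR; field|]; nra).
  rewrite H. field. split; nra. }
rewrite EA, Rabs_div by nra. rewrite Rabs_Ropp, !Rabs_right by nra.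
assert (HB2 : k^2 * B <= k^3 / P).
{ apply Rle_trans with (k^2 * (k / (P+1))). apply Rmult_le_compat_l; nra.
  apply Rmult_le_reg_r with (P * (P+1)); [nra|].
  replace (k ^ 2 * (k / (P + 1)) * (P * (P + 1))) with (k^3 * P) by (field; lra).
  replace (k ^ 3 / P * (P * (P + 1))) with (k^3 * (P+1)) by (field; lra). nra. }
assert (HkB0 : 0 <= k^2 * B) by (apply Rmult_le_pos; [apply pow_le|]; lra).
apply Rle_trans with (k^2*B/(P*P)).
- apply Rmult_le_compat_l; [auto|apply Rinv_le_contravar; nra].
- replace ((k/P)^3) with ((k^3/P)/(P*P)) by (field; lra).
  apply Rmult_le_compat_r; [apply Rlt_le, Rinv_0_lt_compat; nra|auto].
Qed.

Lemma iii_V p k : (3 <= p)%nat -> 0 < k -> Rabs (e2t p k - 1 / INR p) <= 3 * (k / INR p)^2 * (1 / INR p).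
Proof.
intros Hp Hk. pose proof (V_up p k Hp Hk) as Hup.
pose proof (V_up (p+2) k ltac:(lia) Hk) as Hup'.
destruct (facts p k Hp Hk) as (HP & HA & HB & HR & Hf & HV & HV0 & HV' & HV'0 & Hrec).
destruct (B_le p k Hp Hk) as [Hb1 _].
rewrite plus_INR in Hup'. simpl INR in Hup'.
set (B := e1 (p+2) k) in *. set (V' := e2t (p+2) k) in *. set (P := INR p) in *.
set (r := k / P).
assert (Hk' : k = r * P) by (unfold r; field; lra).
assert (Hr : 0 < r) by (unfold r; apply Rdiv_lt_0_compat; lra).
rewrite Rabs_left1 by lra.
assert (HkB : k * B <= P * r^2).
{ apply Rle_trans with (k * (k / (P+1))). apply Rmult_le_compat_l; lra.
  rewrite Hk'. apply Rmult_le_reg_r with (P + 1); [lra|].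
  replace (r * P * (r * P / (P + 1)) * (P + 1)) with (r^2 * P * P) by (field; lra). nra. }
assert (HkV : k^2 * V' <= P * r^2).
{ apply Rle_trans with (k^2 * (1 / (P + (1+1)))). apply Rmult_le_compat_l; nra.
  rewrite Hk'. apply Rmult_le_reg_r with (P + 2); [lra|].
  replace ((r * P) ^ 2 * (1 / (P + (1 + 1))) * (P + 2)) with (r^2 * P * P) by (field; lra). nra. }
set (D := P + k*B) in *.
assert (HD : P <= D <= P + P*r^2) by (unfold D; split; nra).
assert (HD0 : 0 < D) by lra.
set (V := e2t p k) in *.
assert (HVD : V * D^2 = P - k^2 * V') by (rewrite Hrec; field; lra).
assert (Hgoal : 1 - 3*r^2 <= V * P).
{ destruct (Rle_or_lt (1/3) (r^2)) as [Hbig|Hsm].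
  - assert (0 <= V * P) by (apply Rmult_le_pos; lra). lra.
  - set (X := V * P).
    assert (HX : X * D^2 >= P^2 * (1 - r^2)) by (unfold X; nra).
    destruct (Rle_or_lt (1 - 3*r^2) X) as [|HXl]; auto. exfalso.
    assert (HX0 : 0 <= X) by (unfold X; apply Rmult_le_pos; lra).
    assert (D^2 <= (P + P*r^2)^2) by (apply pow_incr; lra).
    assert (X * D^2 <= X * (P + P*r^2)^2) by (apply Rmult_le_compat_l; lra).
    assert (X * (P + P*r^2)^2 < (1 - 3*r^2) * (P + P*r^2)^2).
    { apply Rmult_lt_compat_r; [apply pow_lt; nra|auto]. }
    assert ((1 - 3*r^2) * (P + P*r^2)^2 <= P^2 * (1 - r^2)).
    { replace ((1 - 3*r^2) * (P + P*r^2)^2) with (P^2 * ((1 - 3*r^2)*(1+r^2)^2)) by ring.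
      apply Rmult_le_compat_l; [nra|]. 
      assert (0 <= 5*r^4 + 3*r^6) by (pose proof (pow_le r 4 (Rlt_le _ _ Hr)); pose proof (pow_le r 6 (Rlt_le _ _ Hr)); lra).
      replace ((1 - 3 * r ^ 2) * (1 + r ^ 2) ^ 2) with (1 - r^2 - (5*r^4 + 3*r^6)) by ring. lra. }
    lra. }
apply Rmult_le_reg_r with P; [lra|].
replace ((1 / P - V) * P) with (1 - V * P) by (field; lra).
replace (- (V - 1 / P) * P) with (1 - V * P) by (field; lra).
replace (3 * r ^ 2 * (1 / P) * P) with (3 * r^2) by (field; lra). lra.
Qed.

Lemma f2_eq p k : (3 <= p)%nat -> 0 < k -> f2 p k = (INR p - 1) / (INR p + k * e1 (p+2) k).
Proof.
intros Hp Hk. destruct (facts p k Hp Hk) as (HP & HA & HB & HR & Hf & HV & HV0 & HV' & HV'0 & Hrec).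
rewrite Hf. assert (0 < INR p + k * e1 (p+2) k) by nra.
assert (e1 p k = k / (INR p + k * e1 (p+2) k)) by (apply Rmult_eq_reg_r with (INR p + k * e1 (p+2) k); [rewrite HR; field|]; lra).
rewrite H0. field. lra.
Qed.

Lemma iii_f p k : (3 <= p)%nat -> 0 < k -> Rabs (f2 p k - 1) <= 1 / INR p + (k / INR p)^2.
Proof.
intros Hp Hk. rewrite (f2_eq p k Hp Hk).
destruct (facts p k Hp Hk) as (HP & HA & HB & HR & Hf & HV & HV0 & HV' & HV'0 & Hrec).
destruct (B_le p k Hp Hk) as [Hb1 _].
set (B := e1 (p+2) k) in *. set (P := INR p) in *.
set (r := k / P).
assert (Hk' : k = r * P) by (unfold r; field; lra).
assert (Hr : 0 < r) by (unfold r; apply Rdiv_lt_0_compat; lra).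
assert (HkB : k * B <= P * r^2).
{ apply Rle_trans with (k * (k / (P+1))). apply Rmult_le_compat_l; lra.
  rewrite Hk'. apply Rmult_le_reg_r with (P + 1); [lra|].
  replace (r * P * (r * P / (P + 1)) * (P + 1)) with (r^2 * P * P) by (field; lra). nra. }
set (D := P + k*B) in *.
assert (HD : P <= D <= P + P*r^2) by (unfold D; split; nra).
assert (Hup : (P - 1) / D <= 1).
{ apply Rmult_le_reg_r with D; [lra|]. replace ((P-1)/D*D) with (P-1) by (field; lra). lra. }
assert (Hlow : 1 - 1/P - r^2 <= (P - 1)/D).
{ apply Rmult_le_reg_r with (P * D); [nra|].
  replace ((P-1)/D*(P*D)) with (P*(P-1)) by (field; lra).
  replace ((1 - 1/P - r^2) * (P*D)) with ((P - 1 - P*r^2) * D) by (field; lra).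
  destruct (Rle_or_lt (P - 1 - P*r^2) 0).
  - assert (0 <= -(P - 1 - P * r ^ 2) * D) by (apply Rmult_le_pos; lra). assert (0 <= P * (P - 1)) by nra. nra.
  - apply Rle_trans with ((P - 1 - P*r^2) * (P + P*r^2)).
    + apply Rmult_le_compat_l; lra.
    + assert (0 <= P^2 * r^4) by (apply Rmult_le_pos; [nra|apply pow_le; lra]). nra. }
rewrite Rabs_left1 by lra. lra.
Qed.

Lemma A_le1 p k : (3 <= p)%nat -> 0 < k -> e1 p k <= 1.
Proof.
intros Hp Hk. destruct (facts p k Hp Hk) as (HP & HA & HB & HR & Hf & HV & HV0 & HV' & HV'0 & Hrec).
assert (0 <= (INR p - 1) * e1 p k / k) by (apply Rdiv_le_0_compat; nra). nra.
Qed.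

Lemma i_A p k : (3 <= p)%nat -> 0 < k -> Rabs (e1 p k - 1) <= INR p / k.
Proof.
intros Hp Hk. pose proof (A_le1 p k Hp Hk).
destruct (facts p k Hp Hk) as (HP & HA & HB & HR & Hf & HV & HV0 & HV' & HV'0 & Hrec).
destruct (B_le p k Hp Hk) as [_ Hb1].
set (B := e1 (p+2) k) in *. set (A := e1 p k) in *. set (P := INR p) in *.
rewrite Rabs_left1 by lra.
assert (0 <= A * k * (1 - B)) by (apply Rmult_le_pos; [apply Rmult_le_pos|]; lra).
assert (A * P <= P) by nra.
apply Rmult_le_reg_r with k; [lra|]. replace (P / k * k) with P by (field; lra). nra.
Qed.

Lemma i_V p k : (3 <= p)%nat -> 0 < k -> INR p + 2 <= k -> e2t p k <= 4 * (INR p / k^2).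
Proof.
intros Hp Hk Hk2.
destruct (facts p k Hp Hk) as (HP & HA & HB & HR & Hf & HV & HV0 & HV' & HV'0 & Hrec).
destruct (facts (p+2) k ltac:(lia) Hk) as (HP2 & HA2 & HB2 & HR2 & _).
destruct (B_le (p+2) k ltac:(lia) Hk) as [_ Hc1].
rewrite plus_INR in HR2. simpl INR in HR2.
replace (p + 2 + 2)%nat with (p + 4)%nat in * by lia.
set (C := e1 (p+4) k) in *. set (B := e1 (p+2) k) in *. set (P := INR p) in *.
assert (0 <= B * k * (1 - C)) by (apply Rmult_le_pos; [apply Rmult_le_pos|]; lra).
assert (B * (P + 2) <= B * k) by (apply Rmult_le_compat_l; lra).
assert (HBh : 1/2 <= B) by nra.
set (D := P + k*B) in *.
assert (HD : k/2 <= D) by (unfold D; nra).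
rewrite Hrec.
apply Rle_trans with (P / D^2).
- apply Rmult_le_compat_r; [apply Rlt_le, Rinv_0_lt_compat; apply pow_lt; lra|nra].
- apply Rmult_le_reg_r with (D^2 * k^2); [apply Rmult_lt_0_compat; apply pow_lt; lra|].
  replace (P / D^2 * (D^2 * k^2)) with (P * k^2) by (field; lra).
  replace (4 * (P / k^2) * (D^2 * k^2)) with (4 * P * D^2) by (field; lra).
  assert (k^2 <= 4 * D^2) by nra. nra.
Qed.

Lemma i_f p k : (3 <= p)%nat -> 0 < k ->
  Rabs (f2 p k - INR p / k) <= INR p / k * (INR p / k + 1 / INR p).
Proof.
intros Hp Hk. pose proof (i_A p k Hp Hk) as HiA. pose proof (A_le1 p k Hp Hk).
destruct (facts p k Hp Hk) as (HP & HA & HB & HR & Hf & HV & HV0 & HV' & HV'0 & Hrec).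
rewrite Hf.
set (A := e1 p k) in *. set (P := INR p) in *.
replace ((P - 1) * A / k - P / k) with ((P * (A - 1) - A) / k) by (field; lra).
rewrite Rabs_div by lra. rewrite (Rabs_right k) by lra.
apply Rmult_le_reg_r with k; [lra|].
replace (Rabs (P * (A - 1) - A) / k * k) with (Rabs (P * (A - 1) - A)) by (field; lra).
replace (P / k * (P / k + 1 / P) * k) with (P * (P / k) + 1) by (field; lra).
unfold Rminus at 1. eapply Rle_trans; [apply Rabs_triang|]. rewrite Rabs_Ropp, Rabs_mult.
rewrite (Rabs_right P) by lra. rewrite (Rabs_right A) by lra.
assert (P * Rabs (A - 1) <= P * (P / k)) by (apply Rmult_le_compat_l; lra). lra.
Qed.

Definition U c k := 2 * k / (c + sqrt (c^2 + 4 * k^2)).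

Lemma ii_A p k : (3 <= p)%nat -> 0 < k ->
  k / (INR p + k * U (INR p + 1) k) <= e1 p k <= U (INR p - 1) k.
Proof.
intros Hp Hk.
destruct (facts p k Hp Hk) as (HP & HA & HB & HR & Hf & HV & HV0 & HV' & HV'0 & Hrec).
assert (HBu : e1 (p+2) k <= U (INR p + 1) k) by (apply quad_bound; auto; lra).
assert (HAu : e1 p k <= U (INR p - 1) k) by (apply quad_bound; auto; lra).
split; auto.
set (B := e1 (p+2) k) in *. set (A := e1 p k) in *. set (P := INR p) in *.
set (Ub := U (P+1) k) in *.
assert (0 < P + k*B) by nra.
apply Rmult_le_reg_r with (P + k * Ub); [nra|].
replace (k / (P + k * Ub) * (P + k * Ub)) with k by (field; nra).
assert (0 <= A * k * (Ub - B)) by (apply Rmult_le_pos; [apply Rmult_le_pos|]; lra).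
nra.
Qed.

Lemma ev_p p : nat_diverges p -> forall eps, 0 < eps ->
  exists N, forall n, (N <= n)%nat -> (3 <= p n)%nat /\ 1 / INR (p n) < eps.
Proof.
intros Hd eps Heps. destruct (archimed_cor1 eps Heps) as [M [HM HM0]].
destruct (Hd (Nat.max M 3)) as [N HN]. exists N. intros n Hn.
specialize (HN n Hn). split; [lia|].
assert (HMp : 0 < INR M) by (apply lt_0_INR; lia).
assert (INR M <= INR (p n)) by (apply le_INR; lia).
apply Rle_lt_trans with (/ INR M); auto.
unfold Rdiv. rewrite Rmult_1_l. apply Rinv_le_contravar; lra.
Qed.

Definition Phi x y := 2 * x / (y + sqrt (y^2 + 4 * x^2)).

Lemma U_Phi c k P : 0 < P -> 0 < c -> U c k = Phi (k/P) (c/P).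
Proof.
intros HP Hc. unfold U, Phi.
replace ((c/P)^2 + 4*(k/P)^2) with ((c^2 + 4*k^2) * (/P)^2) by (field; lra).
assert (0 <= c^2 + 4*k^2) by nra.
rewrite sqrt_mult by (auto; apply pow_le; apply Rlt_le, Rinv_0_lt_compat; lra).
rewrite sqrt_pow2 by (apply Rlt_le, Rinv_0_lt_compat; lra).
pose proof (sqrt_pos (c^2 + 4*k^2)).
field. split; lra.
Qed.

Lemma Phi_lim (x y : nat -> R) (a b : R) : is_lim_seq x a -> is_lim_seq y b -> 0 < b ->
  is_lim_seq (fun n => Phi (x n) (y n)) (Phi a b).
Proof.
intros Hx Hy Hb. unfold Phi.
assert (Hs : is_lim_seq (fun n => sqrt (y n ^ 2 + 4 * x n ^ 2)) (sqrt (b^2 + 4 * a^2))).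
{ apply (is_lim_seq_continuous sqrt (fun n => y n ^ 2 + 4 * x n ^ 2)).
  - apply continuity_pt_sqrt. nra.
  - apply (is_lim_seq_plus' (fun n => y n ^ 2) (fun n => 4 * x n ^ 2)).
    + apply (is_lim_seq_ext (fun n => y n * y n)); [intros; ring|].
      replace (b^2) with (b*b) by ring. exact (is_lim_seq_mult' y y b b Hy Hy).
    + apply (is_lim_seq_ext (fun n => 4 * (x n * x n))); [intros; ring|].
      replace (4 * a^2) with (4 * (a*a)) by ring.
      exact (is_lim_seq_mult' (fun _ => 4) (fun n => x n * x n) 4 (a*a) (is_lim_seq_const 4) (is_lim_seq_mult' x x a a Hx Hx)). }
apply is_lim_seq_div'.
- apply is_lim_seq_mult'; [apply is_lim_seq_const|auto].
- apply is_lim_seq_plus'; auto.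
- pose proof (sqrt_pos (b^2 + 4*a^2)). lra.
Qed.

Lemma xi_id xi : 0 < xi ->
  let c := 1/2 + sqrt (1/4 + xi^2) in
  Phi xi 1 = xi / c /\ xi / (1 + xi * (xi / c)) = xi / c.
Proof.
intros Hxi c.
assert (H0 : 0 <= 1/4 + xi^2) by nra.
pose proof (sqrt_pos (1/4 + xi^2)) as Hs0. pose proof (sqrt_sqrt _ H0) as Hss.
unfold c in *. set (s := sqrt (1/4 + xi^2)) in *.
split.
- unfold Phi. replace (1^2 + 4 * xi^2) with (2^2 * (1/4 + xi^2)) by field.
  rewrite sqrt_mult by (try apply pow_le; lra). rewrite sqrt_pow2 by lra. fold s.
  field. lra.
- field_simplify_eq; [nra | split; nra].
Qed.

Theorem lemmaA4 (p : nat -> nat) (kappa : nat -> R)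
  (Hp2 : forall n, (2 <= p n)%nat)
  (Hpinf : nat_diverges p)
  (Hk : forall n, 0 < kappa n) :
  (* (i) *)
  (cv_infty (fun n => kappa n / INR (p n)) ->
     littleo (fun n => e1 (p n) (kappa n) - 1) (fun _ => 1)
     /\ bigO (fun n => e2t (p n) (kappa n)) (fun n => INR (p n) / (kappa n) ^ 2)
     /\ littleo (fun n => f2 (p n) (kappa n) - INR (p n) / kappa n)
                (fun n => INR (p n) / kappa n))
  /\
  (* (ii) *)
  (forall xi : R, 0 < xi ->
     Un_cv (fun n => kappa n / INR (p n)) xi ->
     let cxi := 1 / 2 + sqrt (1 / 4 + xi ^ 2) in
     Un_cv (fun n => e1 (p n) (kappa n)) (xi / cxi)
     /\ bigO (fun n => e2t (p n) (kappa n)) (fun n => 1 / INR (p n))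
     /\ Un_cv (fun n => f2 (p n) (kappa n)) (1 / cxi))
  /\
  (* (iii) *)
  (Un_cv (fun n => kappa n / INR (p n)) 0 ->
     bigO (fun n => e1 (p n) (kappa n) - kappa n / INR (p n))
          (fun n => (kappa n / INR (p n)) ^ 3)
     /\ littleo (fun n => e2t (p n) (kappa n) - 1 / INR (p n)) (fun n => 1 / INR (p n))
     /\ Un_cv (fun n => f2 (p n) (kappa n)) 1).
Proof.
assert (HP : forall n, 2 <= INR (p n)) by (intros n; pose proof (le_INR 2 (p n) (Hp2 n)) as Hq; simpl in Hq; lra).
assert (HP3 : exists N, forall n, (N <= n)%nat -> (3 <= p n)%nat).
{ destruct (ev_p p Hpinf 1 ltac:(lra)) as [N HN]. exists N. intros n Hn. apply HN; auto. }
destruct HP3 as [N3 HN3].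
split; [|split].
- intros Hinf. split; [|split].
  + intros eps Heps. destruct (Hinf (1/eps)) as [N1 HN1].
    exists (Nat.max N1 N3). intros n Hn.
    pose proof (HN1 n ltac:(lia)) as H1. pose proof (HN3 n ltac:(lia)) as H3.
    pose proof (i_A (p n) (kappa n) H3 (Hk n)). pose proof (HP n). pose proof (Hk n).
    rewrite Rabs_R1, Rmult_1_r.
    apply Rle_trans with (INR (p n) / kappa n); auto.
    assert (eps * (kappa n / INR (p n)) > 1).
    { apply Rmult_lt_reg_l with (1/eps). apply Rdiv_lt_0_compat; lra.
      replace (1 / eps * (eps * (kappa n / INR (p n)))) with (kappa n / INR (p n)) by (field; lra).
      replace (1/eps * 1) with (1/eps) by ring. lra. }
    apply Rmult_le_reg_r with (kappa n / INR (p n)). apply Rdiv_lt_0_compat; lra.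
    replace (INR (p n) / kappa n * (kappa n / INR (p n))) with 1 by (field; lra). lra.
  + destruct (Hinf 3) as [N1 HN1]. exists 4, (Nat.max N3 N1).
    intros n Hn.
    pose proof (HN1 n ltac:(lia)) as H1. pose proof (HN3 n ltac:(lia)) as H3.
    pose proof (HP n). pose proof (Hk n).
    assert (INR (p n) + 2 <= kappa n).
    { assert (3 * INR (p n) < kappa n); [|lra].
      apply Rmult_lt_reg_r with (/ INR (p n)). apply Rinv_0_lt_compat; lra.
      replace (3 * INR (p n) * / INR (p n)) with 3 by (field; lra). exact H1. }
    pose proof (i_V (p n) (kappa n) H3 (Hk n) H2).
    destruct (facts (p n) (kappa n) H3 (Hk n)) as (_ & _ & _ & _ & _ & _ & HV0 & _).
    rewrite !Rabs_right; try lra; try (apply Rle_ge, Rdiv_le_0_compat; [lra|apply pow_lt; lra]).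
  + intros eps Heps. destruct (Hinf (2/eps)) as [N1 HN1].
    destruct (ev_p p Hpinf (eps/2) ltac:(lra)) as [N2 HN2].
    exists (Nat.max N1 N2). intros n Hn.
    pose proof (HN1 n ltac:(lia)) as H1. destruct (HN2 n ltac:(lia)) as [H3 H4].
    pose proof (i_f (p n) (kappa n) H3 (Hk n)). pose proof (HP n). pose proof (Hk n).
    rewrite (Rabs_right (INR (p n) / kappa n)) by (apply Rle_ge, Rdiv_le_0_compat; lra).
    eapply Rle_trans; [eassumption|].
    assert (INR (p n) / kappa n < eps/2).
    { assert (eps * (kappa n / INR (p n)) > 2).
      { apply Rmult_lt_reg_l with (1/eps). apply Rdiv_lt_0_compat; lra.
        replace (1 / eps * (eps * (kappa n / INR (p n)))) with (kappa n / INR (p n)) by (field; lra).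
        replace (1/eps * 2) with (2/eps) by (field; lra). lra. }
      apply Rmult_lt_reg_r with (kappa n / INR (p n)). apply Rdiv_lt_0_compat; lra.
      replace (INR (p n) / kappa n * (kappa n / INR (p n))) with 1 by (field; lra). lra. }
    rewrite Rmult_comm. apply Rmult_le_compat_r; [apply Rdiv_le_0_compat; lra|lra].
- intros xi Hxi Hcv cxi.
  set (x := fun n => kappa n / INR (p n)).
  assert (Hx : is_lim_seq x xi) by (apply is_lim_seq_Reals; exact Hcv).
  assert (Hz : is_lim_seq (fun n => 1 / INR (p n)) 0).
  { apply is_lim_seq_Reals. intros eps Heps. destruct (ev_p p Hpinf eps Heps) as [N HN].
    exists N. intros n Hn. destruct (HN n Hn) as [_ H]. unfold R_dist.
    pose proof (HP n). rewrite Rminus_0_r, Rabs_right; [lra|apply Rle_ge, Rdiv_le_0_compat; lra]. }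
  assert (Hym : is_lim_seq (fun n => (INR (p n) - 1) / INR (p n)) 1).
  { apply (is_lim_seq_ext (fun n => 1 - 1 / INR (p n))).
    { intros n. pose proof (HP n). field. lra. }
    pose proof (is_lim_seq_minus' _ _ 1 0 (is_lim_seq_const 1) Hz) as Hm. rewrite Rminus_0_r in Hm. exact Hm. }
  assert (Hyp : is_lim_seq (fun n => (INR (p n) + 1) / INR (p n)) 1).
  { apply (is_lim_seq_ext (fun n => 1 + 1 / INR (p n))).
    { intros n. pose proof (HP n). field. lra. }
    pose proof (is_lim_seq_plus' _ _ 1 0 (is_lim_seq_const 1) Hz) as Hm. rewrite Rplus_0_r in Hm. exact Hm. }
  destruct (xi_id xi Hxi) as [Id1 Id2]. fold cxi in Id1, Id2.
  assert (Hc : 0 < cxi).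
  { unfold cxi. pose proof (sqrt_pos (1/4 + xi^2)). lra. }
  assert (HPhi : 0 < Phi xi 1) by (rewrite Id1; apply Rdiv_lt_0_compat; lra).
  assert (Hup : is_lim_seq (fun n => U (INR (p n) - 1) (kappa n)) (xi / cxi)).
  { rewrite <- Id1.
    apply (is_lim_seq_ext (fun n => Phi (x n) ((INR (p n) - 1) / INR (p n)))).
    { intros n. pose proof (HP n). unfold x. rewrite (U_Phi _ _ (INR (p n))); auto; lra. }
    apply Phi_lim; auto; lra. }
  assert (Hlo : is_lim_seq (fun n => kappa n / (INR (p n) + kappa n * U (INR (p n) + 1) (kappa n))) (xi / cxi)).
  { rewrite <- Id2, <- Id1.
    apply (is_lim_seq_ext (fun n => x n / (1 + x n * Phi (x n) ((INR (p n) + 1) / INR (p n))))).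
    { intros n. pose proof (HP n). pose proof (Hk n). unfold x.
      rewrite <- (U_Phi _ _ (INR (p n))) by lra.
      assert (0 < U (INR (p n) + 1) (kappa n)).
      { unfold U. apply Rdiv_lt_0_compat; [lra|].
        pose proof (sqrt_pos ((INR (p n) + 1)^2 + 4 * kappa n ^ 2)). lra. }
      assert (0 < kappa n / INR (p n) * U (INR (p n) + 1) (kappa n)).
      { apply Rmult_lt_0_compat; auto. apply Rdiv_lt_0_compat; lra. }
      assert (0 < kappa n * U (INR (p n) + 1) (kappa n)) by (apply Rmult_lt_0_compat; lra).
      field. repeat split; lra. }
    apply is_lim_seq_div'; auto.
    - apply is_lim_seq_plus'; [apply is_lim_seq_const|].
      apply is_lim_seq_mult'; auto. apply Phi_lim; auto; lra.
    - assert (0 < xi * Phi xi 1) by (apply Rmult_lt_0_compat; lra). lra. }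
  assert (HA : is_lim_seq (fun n => e1 (p n) (kappa n)) (xi / cxi)).
  { apply (is_lim_seq_le_le_loc _ _ _ _ (ltac:(exists N3; intros n Hn; apply (ii_A (p n) (kappa n) (HN3 n Hn) (Hk n)))) Hlo Hup). }
  split; [|split].
  + apply is_lim_seq_Reals. exact HA.
  + exists 1, N3. intros n Hn. pose proof (HN3 n Hn) as H3.
    pose proof (V_up (p n) (kappa n) H3 (Hk n)). pose proof (HP n).
    destruct (facts (p n) (kappa n) H3 (Hk n)) as (_ & _ & _ & _ & _ & _ & HV0 & _).
    rewrite Rmult_1_l, !Rabs_right; try lra; try (apply Rle_ge, Rdiv_le_0_compat; lra).
  + apply is_lim_seq_Reals.
    replace (1 / cxi) with (1 * (xi / cxi) / xi) by (field; lra).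
    apply (is_lim_seq_ext_loc (fun n => (INR (p n) - 1) / INR (p n) * e1 (p n) (kappa n) / x n)).
    { exists N3. intros n Hn. pose proof (HN3 n Hn) as H3. pose proof (HP n). pose proof (Hk n).
      destruct (facts (p n) (kappa n) H3 (Hk n)) as (_ & _ & _ & _ & Hf & _).
      rewrite Hf. unfold x. field. lra. }
    apply is_lim_seq_div'; [apply is_lim_seq_mult'; auto|auto|lra].
- intros H0.
  assert (Hr : forall e, 0 < e -> exists N, forall n, (N <= n)%nat ->
     (3 <= p n)%nat /\ (kappa n / INR (p n))^2 < e /\ 0 < kappa n / INR (p n)).
  { intros e He. destruct (H0 (Rmin 1 e)) as [N1 HN1].
    { apply Rlt_gt, Rmin_glb_lt; lra. }
    exists (Nat.max N1 N3). intros n Hn. split; [apply HN3; lia|].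
    pose proof (HN1 n ltac:(lia)) as H1. unfold R_dist in H1. rewrite Rminus_0_r in H1.
    pose proof (HP n). pose proof (Hk n).
    assert (0 < kappa n / INR (p n)) by (apply Rdiv_lt_0_compat; lra).
    rewrite Rabs_right in H1 by lra.
    pose proof (Rmin_l 1 e). pose proof (Rmin_r 1 e). split; [|auto]. nra. }
  split; [|split].
  + exists 1, N3. intros n Hn. pose proof (HN3 n Hn) as H3.
    pose proof (iii_A (p n) (kappa n) H3 (Hk n)). pose proof (HP n). pose proof (Hk n).
    rewrite Rmult_1_l. rewrite (Rabs_right ((kappa n / INR (p n))^3)); auto.
    apply Rle_ge, pow_le, Rdiv_le_0_compat; lra.
  + intros eps Heps. destruct (Hr (eps/3) ltac:(lra)) as [N HN]. exists N. intros n Hn.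
    destruct (HN n Hn) as [H3 [Hr2 Hr0]].
    pose proof (iii_V (p n) (kappa n) H3 (Hk n)). pose proof (HP n).
    rewrite (Rabs_right (1 / INR (p n))) by (apply Rle_ge, Rdiv_le_0_compat; lra).
    eapply Rle_trans; [eassumption|].
    apply Rmult_le_compat_r; [apply Rdiv_le_0_compat; lra|lra].
  + intros eps Heps. destruct (Hr (eps/2) ltac:(lra)) as [N HN].
    destruct (ev_p p Hpinf (eps/2) ltac:(lra)) as [N2 HN2].
    exists (Nat.max N N2). intros n Hn.
    destruct (HN n ltac:(lia)) as [H3 [Hr2 Hr0]]. destruct (HN2 n ltac:(lia)) as [_ H4].
    pose proof (iii_f (p n) (kappa n) H3 (Hk n)). unfold R_dist. lra.
Qed.
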